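(* Let $d\ge 2$, $n\ge 2$, $M=(d-1)(n-1)$, and orient the $M$-cells and $(M-1)$-cells of $X(d,n)$ so that the $\mathfrak S_n$-action changes orientations according to $\operatorname{sgn}^{d-1}$ and the cellular boundary of each $M$-cell is the sum of the $(M-1)$-cells in its boundary with coefficients $+1$. Let $b$ be any $\mathfrak S_n$-equivariant integral cellular $(M-1)$-cochain on $X(d,n)$ with values in $\mathcal Z$. Then there are integers $x_1,\dots,x_{n-1}$ (namely $x_j$ is the value of $b$ on the oriented $(M-1)$-cells $\check c(\sigma_1\prec_d\cdots\sigma_j\prec_{d-1}\sigma_{j+1}\cdots\prec_d\sigma_n)$, which is independent of $\sigma$) such that the coboundary $\delta b$ takes the value \[ x_1\binom n1+x_2\binom n2+\dots+x_{n-1}\binom n{n-1} \] on every oriented $M$-cell of $X(d,n)$.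
   Context: $X(d,n)$ is the regular CW complex with cells $\check c(\sigma,\mathbf i)$ indexed by strings $(\sigma_1\prec_{i_1}\cdots\prec_{i_{n-1}}\sigma_n)$, $\sigma\in\mathfrak S_n$, $\mathbf i\in\{1,\dots,d\}^{n-1}$, of dimension $\sum_j i_j-(n-1)$; $\mathfrak S_n$ acts freely by $\pi\cdot(\sigma,\mathbf i)=(\pi\sigma,\mathbf i)$. Face relation: $(\sigma,\mathbf i)\preceq(\sigma',\mathbf i')$ iff for all letters $a$ before $b$ in $\sigma'$: either $a$ before $b$ in $\sigma$ with $m_{\sigma,\mathbf i}(a,b)\le m_{\sigma',\mathbf i'}(a,b)$, or $b$ before $a$ in $\sigma$ with $m_{\sigma,\mathbf i}(a,b)<m_{\sigma',\mathbf i'}(a,b)$, where for letters at positions $p<q$ of $\sigma$, $m_{\sigma,\mathbf i}=\min\{i_p,\dots,i_{q-1}\}$. In particular the $M$-cells are $\check c(\sigma_1\prec_d\cdots\prec_d\sigma_n)$, the $(M-1)$-cells are $\check c(\sigma_1\prec_d\cdots\sigma_j\prec_{d-1}\sigma_{j+1}\cdots\prec_d\sigma_n)$, $1\le j<n$. $\mathcal Z\cong\mathbb Z$ is the $\mathfrak S_n$-module $H_{M-1}(S(W_n^{\oplus(d-1)});\mathbb Z)$, on which $\pi$ acts by multiplication by $(\operatorname{sgn}\pi)^{d-1}$; an equivariant cochain $b$ satisfies $b(\pi\cdot c)=\pi\cdot b(c)$ for oriented cells $c$. *)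

(* Defs.v *)
From HB Require Import structures.
From mathcomp Require Import all_boot all_order all_algebra all_fingroup.
Set Implicit Arguments. Unset Strict Implicit. Unset Printing Implicit Defensive.
Import GRing.Theory Num.Theory.

(* Strings (sigma_1 <_{i_1} ... <_{i_{n-1}} sigma_n):
   sigma : 'S_n maps positions (0-based) to letters, so sigma k = letter at
   position k; i k (k < n-1, 0-based) is the label between positions k, k+1. *)

Definition pos (n : nat) (s : 'S_n) (a : 'I_n) : nat := s^-1%g a.

Definition before (n : nat) (s : 'S_n) (a b : 'I_n) : bool := pos s a < pos s b.

Definition mval (n : nat) (s : 'S_n) (i : nat -> nat) (a b : 'I_n) : nat :=
  let p := minn (pos s a) (pos s b) in
  let q := maxn (pos s a) (pos s b) in
  \big[minn/ i p]_(p <= k < q) i k.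

Definition face (n : nat) (s : 'S_n) (i : nat -> nat) (s' : 'S_n) (i' : nat -> nat)
  : bool :=
  [forall a : 'I_n, forall b : 'I_n, before s' a b ==>
     ((before s a b && (mval s i a b <= mval s' i' a b))
      || (before s b a && (mval s i a b < mval s' i' a b)))].

(* labels of the M-cell (all d) and of the (M-1)-cell with d-1 at gap j *)
Definition topLab (d : nat) : nat -> nat := fun _ => d.
Definition subLab (d : nat) (j : nat) : nat -> nat :=
  fun k => if k == j then d.-1 else d.

(* (M-1)-cells: pairs (sigma, j), j : 'I_(n-1) the (0-based) gap carrying d-1. *)
Definition subcell (n : nat) := ('S_n * 'I_n.-1)%type.

(* Action pi.(sigma, i) = (pi sigma, i): letters relabelled by pi, i.e.
   the new string has letter pi (sigma k) at position k. *)
Definition act_perm (n : nat) (pi s : 'S_n) : 'S_n := (s * pi)%g.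

Definition sgnd (d n : nat) (pi : 'S_n) : int := ((-1) ^+ (odd_perm pi * d.-1))%R.

(* Oriented (M-1)-cells: (r, c) with r = true meaning c with the opposite of
   its chosen orientation.  The action of S_n changes the chosen orientations
   by sgn^(d-1). *)
Definition ocell (n : nat) := (bool * subcell n)%type.

Definition act_ocell (d n : nat) (pi : 'S_n) (oc : ocell n) : ocell n :=
  (oc.1 (+) (odd_perm pi && odd d.-1), (act_perm pi oc.2.1, oc.2.2)).

(* Value of a cochain (given on chosen orientations) on an oriented cell *)
Definition ceval (n : nat) (b : subcell n -> int) (oc : ocell n) : int :=
  ((-1) ^+ oc.1 * b oc.2)%R.

Definition equivariant (d n : nat) (b : subcell n -> int) : Prop :=
  forall (pi : 'S_n) (oc : ocell n),
    ceval b (act_ocell d pi oc) = (sgnd d pi * ceval b oc)%R.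

(* Coboundary on the (chosen-oriented) M-cell c(sigma'_1 <_d ... <_d sigma'_n):
   the boundary is the sum, with coefficient +1, of the (M-1)-cells which are
   faces of it. *)
Definition cobound (d n : nat) (b : subcell n -> int) (s' : 'S_n) : int :=
  (\sum_(c : subcell n | face c.1 (subLab d c.2) s' (topLab d)) b c)%R.

(* Main.v *)
Require Import Defs.
From HB Require Import structures.
From mathcomp Require Import all_boot all_order all_algebra all_fingroup.
Import GRing.Theory Num.Theory.
Set Implicit Arguments. Unset Strict Implicit.

Lemma b_const (d n : nat) (b : subcell n -> int) (hb : equivariant d b)
  (s : 'S_n) (j : 'I_n.-1) : b (s, j) = b (1%g, j).
Proof.
have := hb s (false, (1%g, j)).
rewrite /ceval /act_ocell /sgnd /act_perm /= mul1g mul1r.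
rewrite -[in RHS]signr_odd oddM.
case: (odd_perm s); case: (odd d.-1); rewrite /= ?expr0 ?expr1 ?mul1r ?mulN1r //.
by move=> H; rewrite -[LHS]opprK H opprK.
Qed.

Lemma bigmin_le (r : seq nat) (F : nat -> nat) (idx x : nat) :
  x \in r -> \big[minn/idx]_(k <- r) F k <= F x.
Proof.
elim: r => [|y r IH] //; rewrite in_cons big_cons.
case/orP=> [/eqP->|/IH H]; first exact: geq_minl.
exact: leq_trans (geq_minr _ _) H.
Qed.

Lemma mval_top (n d : nat) (s : 'S_n) (a b : 'I_n) : mval s (topLab d) a b = d.
Proof. by rewrite /mval; elim/big_ind: _ => // x y -> ->; rewrite minnn. Qed.

Lemma mval_le (n d j : nat) (s : 'S_n) (a b : 'I_n) :
  mval s (subLab d j) a b <= d.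
Proof.
rewrite /mval; elim/big_ind: _ => //.
- by rewrite /subLab; case: ifP => // _; apply: leq_pred.
- by move=> x y Hx Hy; rewrite geq_min Hx.
- by move=> i _; rewrite /subLab; case: ifP => // _; apply: leq_pred.
Qed.

Lemma mval_lt (n d j : nat) (s : 'S_n) (a b : 'I_n) : 0 < d ->
  pos s a < pos s b ->
  (mval s (subLab d j) a b < d) = (pos s a <= j < pos s b).
Proof.
move=> d0 ab; rewrite /mval (minn_idPl (ltnW ab)) (maxn_idPr (ltnW ab)).
case H: (pos s a <= j < pos s b).
  have := @bigmin_le (index_iota (pos s a) (pos s b)) (subLab d j) (subLab d j (pos s a)) j.
  rewrite mem_index_iota H => /(_ isT) /leq_ltn_trans; apply.
  by rewrite /subLab eqxx prednK.
apply/negbTE; rewrite -leqNgt big_seq.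
elim/big_ind: _ => //.
- rewrite /subLab; case: eqP => // E; move: H; rewrite -E leqnn ab //.
- by move=> x y Hx Hy; rewrite leq_min Hx.
- move=> i; rewrite mem_index_iota => Hi; rewrite /subLab; case: eqP => // E.
  by move: H; rewrite -E Hi.
Qed.

Definition sface (n j : nat) (s s' : 'S_n) : bool :=
  [forall a : 'I_n, forall b : 'I_n, before s' a b ==>
     (before s a b || ((pos s b <= j) && (j < pos s a)))].

Lemma faceE (n d j : nat) (s s' : 'S_n) : 0 < d ->
  face s (subLab d j) s' (topLab d) = sface j s s'.
Proof.
move=> d0; rewrite /face /sface; apply: eq_forallb => a; apply: eq_forallb => b.
case: (before s' a b) => //=.
rewrite mval_top mval_le andbT /before.
case: (ltngtP (pos s a) (pos s b)) => //= H.
- by rewrite /mval minnC maxnC mval_lt.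
- by rewrite H; case: leqP.
Qed.

Lemma before_irr (n : nat) (s : 'S_n) a : before s a a = false.
Proof. by rewrite /before ltnn. Qed.

Lemma before_trans (n : nat) (s : 'S_n) a b c :
  before s a b -> before s b c -> before s a c.
Proof. exact: ltn_trans. Qed.

Lemma before_total (n : nat) (s : 'S_n) a b :
  a != b -> before s a b || before s b a.
Proof.
move=> ab; rewrite /before /pos; case: ltngtP => // E.
by move: ab; rewrite (perm_inj (val_inj E)) eqxx.
Qed.

Definition Pv (n : nat) (s' : 'S_n) (L : {set 'I_n}) (a : 'I_n) : nat :=
  if a \in L then #|[set c in L | before s' c a]|
  else #|L| + #|[set c in ~: L | before s' c a]|.

Lemma cnt_lt (n : nat) (s' : 'S_n) (A : {set 'I_n}) a :
  a \in A -> #|[set c in A | before s' c a]| < #|A|.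
Proof.
move=> aA; apply: proper_card; apply/properP; split.
  by apply/subsetP => c; rewrite inE => /andP[].
by exists a => //; rewrite inE before_irr andbF.
Qed.

Lemma cnt_mono (n : nat) (s' : 'S_n) (A : {set 'I_n}) a b :
  a \in A -> before s' a b ->
  #|[set c in A | before s' c a]| < #|[set c in A | before s' c b]|.
Proof.
move=> aA ab; apply: proper_card; apply/properP; split.
  apply/subsetP => c; rewrite !inE => /andP[-> /before_trans]; exact.
by exists a; rewrite !inE ?aA ?ab // before_irr andbF.
Qed.

Lemma cnt_le (n : nat) (s' : 'S_n) (A : {set 'I_n}) a :
  #|[set c in A | before s' c a]| <= #|A|.
Proof. by apply: subset_leq_card; apply/subsetP => c; rewrite inE => /andP[]. Qed.

Lemma Pv_in (n : nat) (s' : 'S_n) (L : {set 'I_n}) a : a \in L -> Pv s' L a < #|L|.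
Proof. by move=> aL; rewrite /Pv aL cnt_lt. Qed.

Lemma Pv_out (n : nat) (s' : 'S_n) (L : {set 'I_n}) a : a \notin L -> #|L| <= Pv s' L a.
Proof. by move=> /negbTE aL; rewrite /Pv aL leq_addr. Qed.

Lemma Pv_lt (n : nat) (s' : 'S_n) (L : {set 'I_n}) a : Pv s' L a < n.
Proof.
case aL: (a \in L).
  by apply: leq_trans (Pv_in s' aL) (leq_trans (max_card _) _); rewrite card_ord.
have := cardsC L; rewrite card_ord => E.
rewrite /Pv aL; apply: (leq_trans _ (eq_leq E)).
by rewrite ltn_add2l cnt_lt // inE aL.
Qed.

Lemma Pv_mono (n : nat) (s' : 'S_n) (L : {set 'I_n}) a b :
  before s' a b -> (a \in L) = (b \in L) -> Pv s' L a < Pv s' L b.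
Proof.
move=> ab E; rewrite /Pv -E; case aL: (a \in L); first exact: cnt_mono.
by rewrite ltn_add2l cnt_mono // inE aL.
Qed.

Lemma Pv_inj (n : nat) (s' : 'S_n) (L : {set 'I_n}) : injective (Pv s' L).
Proof.
move=> a b E; apply/eqP; apply/negPn/negP => ab.
have side : forall x y, x \in L -> y \notin L -> Pv s' L x != Pv s' L y.
  by move=> x y xL yL; rewrite neq_ltn (leq_trans (Pv_in s' xL) (Pv_out s' yL)).
case aL: (a \in L); case bL: (b \in L).
- by case/orP: (before_total s' ab) => /Pv_mono => /(_ L); rewrite aL bL E ltnn => /(_ erefl).
- by move: (side a b); rewrite aL bL E eqxx => /(_ erefl erefl).
- by move: (side b a); rewrite aL bL E eqxx => /(_ erefl erefl).
- by case/orP: (before_total s' ab) => /Pv_mono => /(_ L); rewrite aL bL E ltnn => /(_ erefl).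
Qed.

Definition Pord (n : nat) (s' : 'S_n) (L : {set 'I_n}) (a : 'I_n) : 'I_n := Ordinal (Pv_lt s' L a).

Lemma Pord_inj (n : nat) (s' : 'S_n) (L : {set 'I_n}) : injective (Pord s' L).
Proof. by move=> a b /(congr1 val) /= /Pv_inj. Qed.

Definition gperm (n : nat) (s' : 'S_n) (L : {set 'I_n}) : 'S_n := ((perm (@Pord_inj n s' L))^-1)%g.

Lemma pos_g (n : nat) (s' : 'S_n) (L : {set 'I_n}) a : pos (gperm s' L) a = Pv s' L a.
Proof. by rewrite /pos /gperm invgK permE. Qed.

Lemma g_face (n j : nat) (s' : 'S_n) (L : {set 'I_n}) :
  #|L| = j.+1 -> sface j (gperm s' L) s'.
Proof.
move=> cL; apply/forallP => a; apply/forallP => b; apply/implyP => ab.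
rewrite /before !pos_g.
case aL: (a \in L); case bL: (b \in L).
- by rewrite Pv_mono // aL bL.
- have := Pv_in s' aL; have := Pv_out s' (negbT bL); rewrite cL => h1 h2.
  by rewrite (leq_trans h2 h1).
- have := Pv_in s' bL; have := Pv_out s' (negbT aL); rewrite cL => h1 h2.
  by rewrite h1 (_ : Pv s' L b <= j) ?orbT.
- by rewrite Pv_mono // aL bL.
Qed.

Definition Ls (n j : nat) (s : 'S_n) : {set 'I_n} := [set a | pos s a <= j].

Lemma g_L (n j : nat) (s' : 'S_n) (L : {set 'I_n}) :
  #|L| = j.+1 -> Ls j (gperm s' L) = L.
Proof.
move=> cL; apply/setP => a; rewrite inE pos_g.
case aL: (a \in L); first by rewrite -ltnS -cL Pv_in.
by apply/negbTE; rewrite -ltnNge -ltnS -cL; apply: Pv_out; rewrite aL.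
Qed.

Lemma card_ord_lt (n k : nat) : k <= n -> #|[set i : 'I_n | i < k]| = k.
Proof.
move=> kn.
have -> : [set i : 'I_n | i < k] = [set widen_ord kn i | i : 'I_k].
  apply/setP => i; rewrite inE; apply/idP/imsetP.
    by move=> ik; exists (Ordinal ik) => //; apply: val_inj.
  by case=> x _ ->; rewrite /= ltn_ord.
rewrite card_imset ?card_ord // => x y /(congr1 val) /= E; exact: val_inj.
Qed.

Lemma card_pos_lt (n : nat) (s : 'S_n) (k : nat) :
  k <= n -> #|[set b | pos s b < k]| = k.
Proof.
move=> kn; rewrite -[RHS](card_ord_lt kn) -(card_preimset _ (@perm_inj _ s)).
by apply: eq_card => a; rewrite !inE /pos permK.
Qed.

Lemma block_order (n j : nat) (s s' : 'S_n) a b :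
  sface j s s' -> (pos s a <= j) = (pos s b <= j) ->
  before s a b = before s' a b.
Proof.
move=> /forallP F E.
have F' : forall x y, before s' x y -> before s x y || ((pos s y <= j) && (j < pos s x)).
  by move=> x y; move/forallP: (F x) => /(_ y) /implyP.
case ab': (before s' a b).
  case/orP: (F' _ _ ab') => // /andP[h1 h2].
  by move: E; rewrite h1 leqNgt h2.
apply/negbTE/negP => ab.
have nab : a != b by apply: contraTneq ab => ->; rewrite before_irr.
case/orP: (before_total s' nab); first by rewrite ab'.
move/F' => /orP[ba | /andP[h1 h2]].
  by move: (ltn_trans ab ba); rewrite ltnn.
by move: E; rewrite h1 leqNgt h2.
Qed.

Lemma face_unique (n j : nat) (s s' : 'S_n) :
  j < n -> sface j s s' -> s = gperm s' (Ls j s).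
Proof.
move=> jn F.
have cL : #|Ls j s| = j.+1 by rewrite -(card_pos_lt s jn); apply: eq_card => a; rewrite !inE.
apply: invg_inj; apply/permP => a; apply: val_inj.
change (pos s a = pos (gperm s' (Ls j s)) a); rewrite pos_g.
rewrite -[LHS](@card_pos_lt n s (pos s a) (ltnW (ltn_ord _))) /Pv.
case aL: (a \in Ls j s).
  apply: eq_card => c; rewrite !inE.
  move: aL; rewrite inE => aL.
  case cL': (pos s c <= j); last first.
    have h : j < pos s c by rewrite ltnNge cL'.
    by rewrite ltnNge (leq_trans aL (ltnW h)).
  by rewrite -[pos s c < pos s a]/(before s c a) (@block_order n j s s' c a F) ?cL' ?aL.
rewrite -[LHS](cardsID (Ls j s)); congr (_ + _).
  apply: eq_card => c; rewrite !inE.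
  case cL': (pos s c <= j); rewrite ?andbF ?andbT //.
  by move: aL; rewrite inE => /negbT; rewrite -ltnNge; apply: leq_ltn_trans.
apply: eq_card => c; rewrite !inE.
case cL': (pos s c <= j); rewrite ?andbF ?andbT //=.
rewrite -[pos s c < pos s a]/(before s c a) (@block_order n j s s' c a F) // cL'.
by move: aL; rewrite inE => ->.
Qed.

Lemma count_faces (n j : nat) (s' : 'S_n) :
  j < n -> #|[set s : 'S_n | sface j s s']| = 'C(n, j.+1).
Proof.
move=> jn.
have -> : [set s : 'S_n | sface j s s'] =
          [set gperm s' L | L in [set L : {set 'I_n} | #|L| == j.+1]].
  apply/setP => s; rewrite inE; apply/idP/imsetP.
    move=> F; exists (Ls j s); last exact: face_unique.
    by rewrite inE -(card_pos_lt s jn); apply/eqP/eq_card => a; rewrite !inE.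
  by case=> L; rewrite inE => /eqP cL ->; apply: g_face.
rewrite card_in_imset ?card_draws ?card_ord //.
move=> L1 L2; rewrite !inE => /eqP c1 /eqP c2 E.
by rewrite -(g_L s' c1) E g_L.
Qed.

Theorem lemma4p2 (d n : nat) (hd : (2 <= d)%N) (hn : (2 <= n)%N)
  (b : subcell n -> int) (hb : equivariant d b) :
  exists x : 'I_n.-1 -> int,
    (forall (s : 'S_n) (j : 'I_n.-1), b (s, j) = x j) /\
    (forall s' : 'S_n,
       cobound d b s' = (\sum_(j < n.-1) x j * ('C(n, j.+1))%:Z)%R).
Proof.
exists (fun j => b (1%g, j)); split; first by move=> s j; apply: b_const.
move=> s'; rewrite /cobound.
have d0 : 0 < d by apply: leq_trans hd.
rewrite (eq_bigr (fun c => b (1%g, c.2))); last by case=> s j _; apply: b_const.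
rewrite -(pair_big_dep xpredT (fun s (j : 'I_n.-1) => face s (subLab d j) s' (topLab d))
   (fun s j => b (1%g, j))) /=.
rewrite (exchange_big_dep xpredT) //=; apply: eq_bigr => j _.
rewrite (eq_bigl (fun s => s \in [set s : 'S_n | sface j s s'])); last first.
  by move=> s; rewrite inE faceE.
rewrite sumr_const count_faces; last by apply: leq_trans (ltn_ord j) (leq_pred _).
by rewrite -mulr_natr natz.
Qed.
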